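(* Let $X,Y$ be real normed linear spaces, $Z=X\oplus_\infty Y$ and $z=(x,y)\in Z\setminus\{\theta\}$. Then: (i) If $\|x\|>\|y\|$ and $x$ is $\varepsilon_x$-smooth for some $\varepsilon_x\in[0,2)$, then $z$ is $\varepsilon_x$-smooth. (ii) If $\|x\|<\|y\|$ and $y$ is $\varepsilon_y$-smooth for some $\varepsilon_y\in[0,2)$, then $z$ is $\varepsilon_y$-smooth. (iii) If $\|x\|=\|y\|$, then $z$ is not $\varepsilon$-smooth for any $\varepsilon\in[0,2)$.
   Context: $X\oplus_\infty Y$ is $X\times Y$ with norm $\max\{\|x\|,\|y\|\}$. For a normed space $W$ and $w\neq\theta$, $J(w)=\{\phi\in S_{W^*}:\phi(w)=\|w\|\}$, and $w$ is $\delta$-smooth if $\sup_{\phi,\psi\in J(w)}\|\phi-\psi\|\le\delta$; ''approximately smooth'' means $\delta$-smooth for some $\delta\in[0,2)$. *)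

(* Defs.v *)
From HB Require Import structures.
From mathcomp Require Import all_boot all_order all_algebra.
From mathcomp Require Import all_classical all_reals all_analysis.
Set Implicit Arguments. Unset Strict Implicit. Unset Printing Implicit Defensive.
Import Order.TTheory GRing.Theory Num.Theory.
Import numFieldNormedType.Exports.
Local Open Scope classical_set_scope.
Local Open Scope ring_scope.

Section Smooth.
Variables (R : realType) (V : lmodType R) (nrm : V -> R).

Definition is_dual (f : V -> R) : Prop :=
  (forall (a : R) (u v : V), f (a *: u + v) = a * f u + f v) /\
  exists M : R, forall u, `|f u| <= M * nrm u.

Definition dnorm (f : V -> R) : R :=
  sup [set `|f u| | u in [set u | nrm u <= 1]].

Definition Jset (w : V) : set (V -> R) :=
  [set f | is_dual f /\ dnorm f = 1 /\ f w = nrm w].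

Definition delta_smooth (w : V) (delta : R) : Prop :=
  w != 0 /\ forall f g, Jset w f -> Jset w g -> dnorm (f \- g) <= delta.
End Smooth.

Definition nnorm (R : realType) (X : normedModType R) (x : X) : R := `|x|.
Definition inf_norm (R : realType) (X Y : normedModType R) (z : X * Y) : R :=
  Num.max `|z.1| `|z.2|.

(* Main.v *)
Require Import Defs.
From HB Require Import structures.
From mathcomp Require Import all_boot all_order all_algebra.
From mathcomp Require Import all_classical all_reals all_analysis.
From mathcomp Require Import ring lra.
Import Order.TTheory GRing.Theory Num.Theory.
Import numFieldNormedType.Exports.
Local Open Scope classical_set_scope.
Local Open Scope ring_scope.

Section Gen.
Variables (R : realType) (V : lmodType R) (nrm : V -> R).
Hypothesis nrmZ : forall (a : R) w, nrm (a *: w) = `|a| * nrm w.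
Hypothesis nrm_ge0 : forall w, 0 <= nrm w.

Lemma nrm0 : nrm 0 = 0.
Proof. by rewrite -(scale0r (0 : V)) nrmZ normr0 mul0r. Qed.

Lemma lin0 {f} : (forall (a : R) (u v : V), f (a *: u + v) = a * f u + f v) -> f 0 = 0.
Proof.
move=> hf; have := hf 1 0 0; rewrite scale1r addr0 mul1r => /eqP.
by rewrite -subr_eq subrr eq_sym => /eqP.
Qed.

Lemma linZ {f} : (forall (a : R) (u v : V), f (a *: u + v) = a * f u + f v) ->
  forall a u, f (a *: u) = a * f u.
Proof. by move=> hf a u; have := hf a u 0; rewrite addr0 (lin0 hf) addr0. Qed.

Lemma linD {f} : (forall (a : R) (u v : V), f (a *: u + v) = a * f u + f v) ->
  forall u v, f (u + v) = f u + f v.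
Proof. by move=> hf u v; have := hf 1 u v; rewrite scale1r mul1r. Qed.

Lemma dnorm_ub f c : (forall u, nrm u <= 1 -> `|f u| <= c) -> dnorm nrm f <= c.
Proof.
move=> h; apply: ge_sup.
  by exists `|f 0|; exists 0 => //; rewrite /= nrm0.
by move=> _ [u hu <-]; exact: h.
Qed.

Lemma dnorm_lb {f} u : is_dual nrm f -> nrm u <= 1 -> `|f u| <= dnorm nrm f.
Proof.
move=> [hl [M hM]] hu; apply: ub_le_sup; last by exists u.
exists `|M|; move=> _ [w hw <-]; apply: (le_trans (hM w)).
apply: (le_trans (ler_norm _)); rewrite normrM (ger0_norm (nrm_ge0 w)).
by rewrite -[leRHS]mulr1 ler_wpM2l.
Qed.

Lemma dual_le f : is_dual nrm f -> dnorm nrm f <= 1 -> forall w, `|f w| <= nrm w.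
Proof.
move=> hd hn w; have [hl [M hM]] := hd.
have [e|hpos] := eqVneq (nrm w) 0.
  by have := hM w; rewrite e mulr0.
have s0 : 0 < nrm w by rewrite lt_def hpos nrm_ge0.
have h1 : nrm ((nrm w)^-1 *: w) <= 1.
  by rewrite nrmZ ger0_norm ?invr_ge0 ?nrm_ge0// mulVf.
have := le_trans (dnorm_lb _ hd h1) hn.
rewrite (linZ hl) normrM ger0_norm ?invr_ge0 ?nrm_ge0//.
by rewrite ler_pdivrMl // mulr1.
Qed.

End Gen.

Lemma dual_sub (R : realType) (V : lmodType R) (nrm : V -> R) f g :
  is_dual nrm f -> is_dual nrm g -> is_dual nrm (f \- g).
Proof.
move=> [lf [Mf hf]] [lg [Mg hg]]; split.
  by move=> a u v /=; rewrite lf lg; ring.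
exists (Mf + Mg) => u /=; apply: (le_trans (ler_normB _ _)).
by rewrite mulrDl lerD.
Qed.
Arguments nrm0 {R V nrm}.
Arguments lin0 {R V f}.
Arguments linZ {R V f}.
Arguments linD {R V f}.
Arguments dnorm_ub {R V nrm}.
Arguments dnorm_lb {R V nrm}.
Arguments dual_le {R V nrm}.
Arguments dual_sub {R V nrm f g}.

Section HB.
Variables (R : realType) (X : normedModType R) (x0 : X).

Definition PG (G : set (X * R)) : Prop :=
  [/\ (forall u r s, G (u, r) -> G (u, s) -> r = s),
      (forall (a : R) u v r s, G (u, r) -> G (v, s) -> G (a *: u + v, a * r + s)),
      (forall u r, G (u, r) -> r <= `|u|) &
      (forall p, G p -> G (x0, `|x0|))].

Lemma PG_chain (F : set (set (X * R))) : F `<=` PG -> total_on F subset ->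
  PG (\bigcup_(G in F) G).
Proof.
move=> FP tot; split.
- move=> u r s [G1 F1 h1] [G2 F2 h2].
  have [s12|s21] := tot _ _ F1 F2.
    by have [+ _ _ _] := FP _ F2; apply; [exact: s12 h1|].
  by have [+ _ _ _] := FP _ F1; apply; [|exact: s21 h2].
- move=> a u v r s [G1 F1 h1] [G2 F2 h2].
  have [s12|s21] := tot _ _ F1 F2.
    by exists G2 => //; have [_ + _ _] := FP _ F2; apply; [exact: s12 h1|].
  by exists G1 => //; have [_ + _ _] := FP _ F1; apply; [|exact: s21 h2].
- by move=> u r [G1 F1 h1]; have [_ _ h _] := FP _ F1; exact: h h1.
- by move=> p [G1 F1 h1]; exists G1 => //; have [_ _ _ h] := FP _ F1; exact: h h1.
Qed.

Lemma PG0 {G} : PG G -> G (x0, `|x0|) -> G (0, 0).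
Proof.
move=> [_ hc _ _] h; have := hc (-1) _ _ _ _ h h.
by rewrite scaleN1r addNr mulN1r addNr.
Qed.

Lemma PGZ {G} : PG G -> G (x0, `|x0|) -> forall a u r, G (u, r) -> G (a *: u, a * r).
Proof.
move=> hP hx a u r h; have [_ hc _ _] := hP.
by have := hc a _ _ _ _ h (PG0 hP hx); rewrite addr0 addr0.
Qed.

Lemma PG_ext G v : PG G -> G (x0, `|x0|) -> (forall r, ~ G (v, r)) ->
  exists2 B, PG B & G `<` B.
Proof.
move=> hP hx hv; have [hf hc hd _] := hP.
have h00 := PG0 hP hx.
pose S := [set z : R | exists u r, G (u, r) /\ z = r - `|u - v|].
have key : forall u r w s, G (u, r) -> G (w, s) -> r - `|u - v| <= `|w + v| - s.
  move=> u r w s hu hw; have := hd _ _ (hc 1 _ _ _ _ hu hw).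
  rewrite scale1r mul1r => h.
  rewrite lerBrDr addrAC lerBlDr; apply: (le_trans h).
  rewrite (_ : u + w = (w + v) + (u - v)); first exact: ler_normD.
  by rewrite addrACA subrr addr0 addrC.
pose c := sup S.
have Sn : S !=set0 by exists (0 - `|0 - v|); exists 0, 0.
have Sub : forall w s, G (w, s) -> ubound S (`|w + v| - s).
  by move=> w s hw _ [u [r [hu ->]]]; exact: key.
have cle : forall w s, G (w, s) -> c <= `|w + v| - s.
  by move=> w s hw; apply: ge_sup => //; exact: Sub.
have cge : forall u r, G (u, r) -> r - `|u - v| <= c.
  move=> u r hu; apply: ub_le_sup; first by exists (`|0 + v| - 0); exact: Sub.
  by exists u, r.
pose B := [set p : X * R | exists u r (t : R), G (u, r) /\ p = (u + t *: v, r + t * c)].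
have GB : G `<=` B.
  by move=> [u r] h; exists u, r, 0; split => //; rewrite scale0r mul0r !addr0.
exists B; last first.
  split => //; move=> /(_ (v, c)) hB.
  have : B (v, c) by exists 0, 0, 1; rewrite scale1r mul1r !add0r.
  by move=> /hB /hv.
split.
- move=> u r s [u1 [r1 [t1 [h1 [-> ->]]]]] [u2 [r2 [t2 [h2 [e ->]]]]].
  have [et|net] := eqVneq t1 t2.
    subst t2; move/addIr: e => eu; subst u2.
    by rewrite (hf _ _ _ h1 h2).
  exfalso; have d0 : t1 - t2 != 0 by rewrite subr_eq0.
  have E2 : u2 = u1 + t1 *: v - t2 *: v by rewrite e addrK.
  have e2 : v = (t1 - t2)^-1 *: ((-1) *: u1 + u2).
    apply: (@scalerI _ _ (t1 - t2)) => //.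
    rewrite scalerA mulfV // scale1r scaleN1r E2 scalerBl.
    by rewrite -[u1 + _ - _]addrA addKr.
  apply: (hv ((t1 - t2)^-1 * ((-1) * r1 + r2))); rewrite {1}e2.
  by apply: (PGZ hP hx); apply: hc.
- move=> a u w r s [u1 [r1 [t1 [h1 [-> ->]]]]] [u2 [r2 [t2 [h2 [-> ->]]]]].
  exists (a *: u1 + u2), (a * r1 + r2), (a * t1 + t2); split; first exact: hc.
  congr (_, _); last by ring.
  by rewrite scalerDr scalerA scalerDl addrACA.
- move=> u r [u1 [r1 [t [h1 [-> ->]]]]].
  have [t0|tn0] := eqVneq t 0.
    by subst t; rewrite scale0r mul0r !addr0; exact: hd.
  have [tpos|tneg] := ltP 0 t.
    have h := cle _ _ (PGZ hP hx t^-1 _ _ h1).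
    have : t * c <= t * (`|t^-1 *: u1 + v| - t^-1 * r1) by rewrite ler_wpM2l // ltW.
    have nt : `|t *: (t^-1 *: u1 + v)| = t * `|t^-1 *: u1 + v|.
      by rewrite normrZ gtr0_norm.
    rewrite mulrBr mulrA mulfV // mul1r -nt.
    rewrite scalerDr scalerA mulfV // scale1r; lra.
  have sp : 0 < - t by rewrite oppr_gt0 lt_neqAle tn0 tneg.
  have h := cge _ _ (PGZ hP hx (- t)^-1 _ _ h1).
  have : (- t) * ((- t)^-1 * r1 - `|(- t)^-1 *: u1 - v|) <= (- t) * c.
    by rewrite ler_wpM2l // ltW.
  have nt : `|(- t) *: ((- t)^-1 *: u1 - v)| = (- t) * `|(- t)^-1 *: u1 - v|.
    by rewrite normrZ gtr0_norm.
  rewrite mulrBr mulrA mulfV ?gt_eqF // mul1r -nt.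
  rewrite scalerBr scalerA mulfV ?gt_eqF // scale1r scaleNr opprK; lra.
- by move=> p _; exact: GB.
Qed.

Lemma hahn_banach : exists f : X -> R,
  [/\ (forall (a : R) (u v : X), f (a *: u + v) = a * f u + f v),
     (forall u : X, `|f u| <= `|u|) & f x0 = `|x0|].
Proof.
have [A [PA Amax]] := @Zorn_bigcup _ PG PG_chain.
have Ax : A (x0, `|x0|).
  have [//|nAx] := pselect (A (x0, `|x0|)).
  exfalso; pose B0 := [set p : X * R | exists t : R, p = (t *: x0, t * `|x0|)].
  apply: (Amax B0).
    split; first by move=> p Ap; exfalso; apply: nAx; have [_ _ _ h] := PA; exact: h p Ap.
    by move=> /(_ (x0, `|x0|)) h; apply: nAx; apply: h; exists 1; rewrite scale1r mul1r.
  split.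
  - move=> u r s [t [-> ->]] [t' [e ->]].
    apply/eqP; rewrite -subr_eq0 -mulrBl; apply/eqP.
    have : `|(t - t') *: x0| = 0 by rewrite scalerBl e subrr normr0.
    rewrite normrZ => /eqP; rewrite mulf_eq0 => /orP[|] /eqP h.
      by move/eqP: h; rewrite normr_eq0 => /eqP ->; rewrite mul0r.
    by rewrite h mulr0.
  - move=> a u w r s [t [-> ->]] [t' [-> ->]]; exists (a * t + t').
    by rewrite scalerDl scalerA mulrDl mulrA.
  - move=> u r [t [-> ->]]; rewrite normrZ ler_wpM2r //; exact: ler_norm.
  - by move=> _ _; exists 1; rewrite scale1r mul1r.
have h00 := PG0 PA Ax.
have [hf hc hd _] := PA.
have tot : forall u, exists r, A (u, r).
  move=> v; apply: contrapT => nv.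
  have hv : forall r, ~ A (v, r) by move=> r hr; apply: nv; exists r.
  have [B PB AB] := PG_ext _ _ PA Ax hv.
  exact: Amax B AB PB.
have [f hfA] := choice tot.
have lin : forall (a : R) u v, f (a *: u + v) = a * f u + f v.
  by move=> a u v; apply: (hf (a *: u + v)); [exact: hfA | exact: hc].
exists f; split => //; last by apply: hf (hfA x0) Ax.
move=> u; rewrite ler_norml hd ?hfA // andbT.
have : f (- u) = - f u.
  by have := lin (-1) u 0; rewrite scaleN1r addr0 mulN1r (lin0 lin) addr0.
rewrite lerNl => <-; rewrite -normrN; exact: hd (hfA _).
Qed.

End HB.
Arguments hahn_banach {R X}.

Lemma nnZ (R : realType) (Z : normedModType R) (a : R) (w : Z) :
  nnorm (a *: w) = `|a| * nnorm w.
Proof. by rewrite /nnorm normrZ. Qed.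
Lemma nn0 (R : realType) (Z : normedModType R) (w : Z) : 0 <= nnorm w.
Proof. by rewrite /nnorm. Qed.

Lemma eq_le_refl {T : realType} {a b : T} : a = b -> a <= b.
Proof. by move=> ->. Qed.

Section Main.
Variables (R : realType) (X Y : normedModType R).
Local Notation N := (@inf_norm R X Y).

Lemma pairE (a : R) (u u' : X) (v v' : Y) :
  (a *: (u, v) + (u', v')) = (a *: u + u', a *: v + v').
Proof. by []. Qed.
Lemma pairD (u u' : X) (v v' : Y) : ((u, v) + (u', v')) = (u + u', v + v').
Proof. by []. Qed.

Lemma NZ (a : R) (w : X * Y) : N (a *: w) = `|a| * N w.
Proof. by case: w => u v; rewrite /inf_norm /= !normrZ maxr_pMr. Qed.
Lemma N0 (w : X * Y) : 0 <= N w.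
Proof. by rewrite /inf_norm le_max normr_ge0. Qed.

Lemma part1 (x : X) (y : Y) f : `|y| < `|x| -> Jset N (x, y) f ->
  (forall v, f (0, v) = 0) /\ Jset (@nnorm R X) x (fun u => f (u, 0)).
Proof.
move=> hxy [[hl [M hM]] [hd hfz]].
have hle := dual_le NZ N0 f (conj hl (ex_intro _ M hM)) (eq_le_refl hd).
have Nz : N (x, y) = `|x| by rewrite /inf_norm /= max_l // ltW.
have f0 : forall v, f (0, v) = 0.
  move=> v; pose d := (`|x| - `|y|) / (`|v| + 1).
  have d0 : 0 < d by rewrite divr_gt0 // ?subr_gt0 // ltr_wpDl.
  have dv : d * `|v| <= `|x| - `|y|.
    rewrite /d mulrAC ler_pdivrMr ?ltr_wpDl // ler_wpM2l ?lerDl //.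
    by rewrite subr_ge0 ltW.
  have key : forall t, `|t| <= d -> t * f (0, v) <= 0.
    move=> t ht; have := hle (t *: (0, v) + (x, y)); rewrite hl hfz Nz.
    have : N (t *: (0, v) + (x, y)) <= `|x|.
      rewrite pairE /inf_norm /= scaler0 add0r ge_max lexx /=.
      apply: (le_trans (ler_normD _ _)); rewrite normrZ.
      have : `|t| * `|v| <= d * `|v| by rewrite ler_wpM2r.
      lra.
    move=> h1 h2; have := le_trans (ler_norm _) (le_trans h2 h1); lra.
  have h1 := key d (eq_le_refl (ger0_norm (ltW d0))).
  have h2 := key (- d) (eq_le_refl (etrans (normrN _) (ger0_norm (ltW d0)))).
  rewrite pmulr_rle0 // in h1; rewrite mulNr oppr_le0 pmulr_rge0 // in h2.
  by apply/le_anti; rewrite h1 h2.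
have linX : forall (a : R) (u u' : X), f (a *: u + u', 0) = a * f (u, 0) + f (u', 0).
  by move=> a u u'; rewrite -hl pairE scaler0 addr0.
have fx : f (x, 0) = `|x|.
  by have := linD hl (x, 0) (0, y); rewrite pairD addr0 add0r f0 addr0 hfz Nz.
have x0 : 0 < `|x| by apply: le_lt_trans hxy.
have bX : forall u, `|f (u, 0)| <= `|u|.
  by move=> u; have := hle (u, 0); rewrite /inf_norm /= normr0 max_l.
have dX : is_dual (@nnorm R X) (fun u => f (u, 0)).
  by split => //; exists 1 => u; rewrite mul1r /nnorm bX.
split => //; split => //; split; last by rewrite fx.
apply/le_anti/andP; split.
  by apply: (dnorm_ub (@nnZ R X)) => u hu; apply: le_trans (bX u) hu.
have := dnorm_lb (@nn0 R X) _ (`|x|^-1 *: x) dX.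
rewrite /= (linZ linX) fx mulVf ?gt_eqF // normr1; apply.
rewrite nnZ /nnorm ger0_norm; last by rewrite invr_ge0 ltW.
by rewrite mulVf // gt_eqF.
Qed.

Lemma part2 (x : X) (y : Y) f : `|x| < `|y| -> Jset N (x, y) f ->
  (forall u, f (u, 0) = 0) /\ Jset (@nnorm R Y) y (fun v => f (0, v)).
Proof.
move=> hxy [[hl [M hM]] [hd hfz]].
have hle := dual_le NZ N0 f (conj hl (ex_intro _ M hM)) (eq_le_refl hd).
have Nz : N (x, y) = `|y| by rewrite /inf_norm /= max_r // ltW.
have f0 : forall v, f (v, 0) = 0.
  move=> v; pose d := (`|y| - `|x|) / (`|v| + 1).
  have d0 : 0 < d by rewrite divr_gt0 // ?subr_gt0 // ltr_wpDl.
  have dv : d * `|v| <= `|y| - `|x|.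
    rewrite /d mulrAC ler_pdivrMr ?ltr_wpDl // ler_wpM2l ?lerDl //.
    by rewrite subr_ge0 ltW.
  have key : forall t, `|t| <= d -> t * f (v, 0) <= 0.
    move=> t ht; have := hle (t *: (v, 0) + (x, y)); rewrite hl hfz Nz.
    have : N (t *: (v, 0) + (x, y)) <= `|y|.
      rewrite pairE /inf_norm /= scaler0 add0r ge_max lexx andbT.
      apply: (le_trans (ler_normD _ _)); rewrite normrZ.
      have : `|t| * `|v| <= d * `|v| by rewrite ler_wpM2r.
      lra.
    move=> h1 h2; have := le_trans (ler_norm _) (le_trans h2 h1); lra.
  have h1 := key d (eq_le_refl (ger0_norm (ltW d0))).
  have h2 := key (- d) (eq_le_refl (etrans (normrN _) (ger0_norm (ltW d0)))).
  rewrite pmulr_rle0 // in h1; rewrite mulNr oppr_le0 pmulr_rge0 // in h2.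
  by apply/le_anti; rewrite h1 h2.
have linX : forall (a : R) (u u' : Y), f (0, a *: u + u') = a * f (0, u) + f (0, u').
  by move=> a u u'; rewrite -hl pairE scaler0 addr0.
have fx : f (0, y) = `|y|.
  by have := linD hl (x, 0) (0, y); rewrite pairD addr0 add0r f0 add0r hfz Nz.
have x0 : 0 < `|y| by apply: le_lt_trans hxy.
have bX : forall u, `|f (0, u)| <= `|u|.
  by move=> u; have := hle (0, u); rewrite /inf_norm /= normr0 max_r.
have dX : is_dual (@nnorm R Y) (fun u => f (0, u)).
  by split => //; exists 1 => u; rewrite mul1r /nnorm bX.
split => //; split => //; split; last by rewrite fx.
apply/le_anti/andP; split.
  by apply: (dnorm_ub (@nnZ R Y)) => u hu; apply: le_trans (bX u) hu.
have := dnorm_lb (@nn0 R Y) _ (`|y|^-1 *: y) dX.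
rewrite /= (linZ linX) fx mulVf ?gt_eqF // normr1; apply.
rewrite nnZ /nnorm ger0_norm; last by rewrite invr_ge0 ltW.
by rewrite mulVf // gt_eqF.
Qed.

End Main.
Arguments part1 {R X Y x y f}.
Arguments part2 {R X Y x y f}.

Local Close Scope classical_set_scope.

Lemma normV1 (R : realType) (Z : normedModType R) (x : Z) : x != 0 ->
  `| (`|x|^-1 *: x) | = 1.
Proof.
move=> x0; rewrite normrZ ger0_norm ?invr_ge0 // mulVf //.
by rewrite normr_eq0.
Qed.

Lemma dualF (R : realType) (X Y : normedModType R) (phi : X -> R) :
  (forall (a : R) (u v : X), phi (a *: u + v) = a * phi u + phi v) ->
  (forall u, `|phi u| <= `|u|) ->
  is_dual (@inf_norm R X Y) (fun w => phi w.1).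
Proof.
move=> lp bp; split; first by move=> a [u v] [u' v'] /=; rewrite lp.
by exists 1 => -[u v]; rewrite mul1r /inf_norm /=; apply: le_trans (bp u) _; rewrite le_max lexx.
Qed.

Lemma dualG (R : realType) (X Y : normedModType R) (psi : Y -> R) :
  (forall (a : R) (u v : Y), psi (a *: u + v) = a * psi u + psi v) ->
  (forall u, `|psi u| <= `|u|) ->
  is_dual (@inf_norm R X Y) (fun w => psi w.2).
Proof.
move=> lp bp; split; first by move=> a [u v] [u' v'] /=; rewrite lp.
by exists 1 => -[u v]; rewrite mul1r /inf_norm /=; apply: le_trans (bp v) _; rewrite le_max lexx orbT.
Qed.

Theorem theorem6p5 (R : realType) (X Y : normedModType R) (x : X) (y : Y)
  (hz : ((x, y) : X * Y) != 0) :
  (`|y| < `|x| -> forall ex : R, 0 <= ex < 2 ->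
     delta_smooth (@nnorm R X) x ex ->
     delta_smooth (@inf_norm R X Y) (x, y) ex) /\
  (`|x| < `|y| -> forall ey : R, 0 <= ey < 2 ->
     delta_smooth (@nnorm R Y) y ey ->
     delta_smooth (@inf_norm R X Y) (x, y) ey) /\
  (`|x| = `|y| -> forall e : R, 0 <= e < 2 ->
     ~ delta_smooth (@inf_norm R X Y) (x, y) e).
Proof.
split; [|split].
- move=> hxy ex _ [_ hJ]; split => // f g hf hg.
  have [f0 Jf] := part1 hxy hf; have [g0 Jg] := part1 hxy hg.
  have hle := hJ _ _ Jf Jg.
  have [df _] := hf; have [dg _] := hg.
  apply: (dnorm_ub (@NZ R X Y)) => -[u v] huv /=.
  have e : forall h : X * Y -> R, is_dual (@inf_norm R X Y) h ->
      (forall v, h (0, v) = 0) -> h (u, v) = h (u, 0).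
    move=> h [hl _] h0; have := linD hl (u, 0) (0, v).
    by rewrite pairD addr0 add0r h0 addr0.
  rewrite (e f df f0) (e g dg g0); apply: le_trans hle.
  have [dFx _] := Jf; have [dGx _] := Jg.
  have hu : nnorm u <= 1 by move: huv; rewrite /inf_norm /= ge_max => /andP[].
  exact: (dnorm_lb (@nn0 R X) _ u (dual_sub dFx dGx) hu).
- move=> hxy ex _ [_ hJ]; split => // f g hf hg.
  have [f0 Jf] := part2 hxy hf; have [g0 Jg] := part2 hxy hg.
  have hle := hJ _ _ Jf Jg.
  have [df _] := hf; have [dg _] := hg.
  apply: (dnorm_ub (@NZ R X Y)) => -[u v] huv /=.
  have e : forall h : X * Y -> R, is_dual (@inf_norm R X Y) h ->
      (forall u, h (u, 0) = 0) -> h (u, v) = h (0, v).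
    move=> h [hl _] h0; have := linD hl (u, 0) (0, v).
    by rewrite pairD addr0 add0r h0 add0r.
  rewrite (e f df f0) (e g dg g0); apply: le_trans hle.
  have [dFx _] := Jf; have [dGx _] := Jg.
  have hu : nnorm v <= 1 by move: huv; rewrite /inf_norm /= ge_max => /andP[].
  exact: (dnorm_lb (@nn0 R Y) _ v (dual_sub dFx dGx) hu).
- move=> exy e /andP[_ e2] [_ hJ].
  have x0 : x != 0.
    apply: contraNneq hz => x0; move: exy; rewrite x0 normr0 => /esym/eqP.
    by rewrite normr_eq0 => /eqP ->.
  have y0 : y != 0 by rewrite -normr_eq0 -exy normr_eq0.
  have [phi [lp bp px]] := hahn_banach x.
  have [psi [lq bq qy]] := hahn_banach y.
  have dF := @dualF R X Y _ lp bp; have dG := @dualG R X Y _ lq bq.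
  have Nz : inf_norm (x, y) = `|x| by rewrite /inf_norm /= exy maxxx.
  have ub : forall h : X * Y -> R, (forall w, `|h w| <= inf_norm w) ->
      dnorm (@inf_norm R X Y) h <= 1.
    by move=> h hh; apply: (dnorm_ub (@NZ R X Y)) => w hw; apply: le_trans (hh w) hw.
  have JF : Jset (@inf_norm R X Y) (x, y) (fun w => phi w.1).
    split => //; split; last by rewrite /= px Nz.
    apply/le_anti/andP; split.
      by apply: ub => -[u v]; rewrite /inf_norm /=; apply: le_trans (bp u) _; rewrite le_max lexx.
    have := dnorm_lb (@N0 R X Y) _ (`|x|^-1 *: x, 0) dF.
    rewrite /= (linZ lp) px mulVf ?normr_eq0 // normr1; apply.
    by rewrite /inf_norm /= normV1 // normr0 ge_max lexx ler01.
  have JG : Jset (@inf_norm R X Y) (x, y) (fun w => psi w.2).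
    split => //; split; last by rewrite /= qy Nz exy.
    apply/le_anti/andP; split.
      by apply: ub => -[u v]; rewrite /inf_norm /=; apply: le_trans (bq v) _; rewrite le_max lexx orbT.
    have := dnorm_lb (@N0 R X Y) _ (0, `|y|^-1 *: y) dG.
    rewrite /= (linZ lq) qy mulVf ?normr_eq0 // normr1; apply.
    by rewrite /inf_norm /= normV1 // normr0 ge_max lexx ler01.
  have := hJ _ _ JF JG.
  have := dnorm_lb (@N0 R X Y) _ (`|x|^-1 *: x, - (`|y|^-1 *: y)) (dual_sub dF dG).
  rewrite /= -scaleN1r !(linZ lp) !(linZ lq) px qy !mulVf ?normr_eq0 //.
  rewrite /inf_norm /= normV1 // normrZ normV1 // normrN1 mul1r maxxx lexx => /(_ isT) h1 h2.
  have := le_trans h1 h2; rewrite (_ : 1 - -1 * 1 = 2); last by ring.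
  by rewrite ger0_norm // => h3; have := lt_le_trans e2 h3; rewrite ltxx.
Qed.
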